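(* Let $d,N\ge1$, $\epsilon\in(0,1]$, $\delta\in[0,1]$, $\beta\in(0,1/2]$ with $N\ge d\ln(2d/\beta)$, and let $k=\max\{1,\min\{d,\lfloor\epsilon/2.17\rfloor\}\}$. Let $x(1),\dots,x(N)\in[-1,1]^d$ and let $x^*(i)$ be obtained by applying Algorithm 3 (parameters $\epsilon,\delta,k$) independently to each $x(i)$. For $j\in\{1,\dots,d\}$ put $Z_j=\frac1N\sum_{i=1}^Nx^*_j(i)$ and $X_j=\frac1N\sum_{i=1}^Nx_j(i)$. Then with probability at least $1-\beta$, $$\max_{j\in\{1,\dots,d\}}|Z_j-X_j|=O\!\left(\frac{\sqrt{d\log(d/\beta)}}{(\epsilon+2\delta)\sqrt N}\right),$$ where the implied constant is absolute.
   Context: Algorithm 2 with parameters $\epsilon'>0,\delta'\in[0,1]$: let $B_1=\frac{e^{\epsilon'}+1}{e^{\epsilon'}+2\delta'-1}$; on input $y\in[-1,1]$ it outputs $B_1$ with probability $\frac{e^{\epsilon'}+2\delta'-1}{2(e^{\epsilon'}+1)}y+\frac12$ and $-B_1$ otherwise. Algorithm 3 with parameters $\epsilon>0$, $\delta\ge0$ and $k\in\{1,\dots,d\}$: on input $x\in[-1,1]^d$, set $x^*=(0,\dots,0)$, choose a uniformly random $k$-element subset $S\subseteq\{1,\dots,d\}$, and for each $j\in S$ apply Algorithm 2 with parameters $\epsilon/k,\delta/k$ to $x_j$ to obtain $\bar x_j$ (independently over $j$) and set $x^*_j=\frac dk\bar x_j$; output $x^*$. *)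

(* Defs.v *)
From Stdlib Require Import Reals Lra List.
Import ListNotations.
Open Scope R_scope.

(* Finite probability distributions as weighted lists (weight, outcome). *)
Definition dist (A : Type) := list (R * A).

Definition dret {A} (a : A) : dist A := [(1, a)].

Definition dbind {A B} (m : dist A) (f : A -> dist B) : dist B :=
  flat_map (fun pa => map (fun qb => (fst pa * fst qb, snd qb)) (f (snd pa))) m.

Definition Pr {A} (m : dist A) (P : A -> bool) : R :=
  fold_right Rplus 0 (map (fun pa => if P (snd pa) then fst pa else 0) m).

Definition uniform {A} (l : list A) : dist A :=
  map (fun a => (/ INR (length l), a)) l.

Fixpoint ksubsets (k : nat) (l : list nat) : list (list nat) :=
  match l with
  | [] => match k with O => [[]] | S _ => [] end
  | a :: l' => match k with
               | O => [[]]
               | S k' => map (cons a) (ksubsets k' l') ++ ksubsets k l'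
               end
  end.

Definition alg2 (eps' delta' y : R) : dist R :=
  let B1 := (exp eps' + 1) / (exp eps' + 2 * delta' - 1) in
  let p := (exp eps' + 2 * delta' - 1) / (2 * (exp eps' + 1)) * y + 1 / 2 in
  [(p, B1); (1 - p, - B1)].

Definition upd (v : nat -> R) (j : nat) (a : R) : nat -> R :=
  fun j' => if Nat.eqb j' j then a else v j'.

(* Algorithm 3 with parameters eps, delta, k in dimension d; coordinates are
   indexed 0..d-1 and vectors are functions nat -> R. *)
Definition alg3 (eps delta : R) (k d : nat) (x : nat -> R) : dist (nat -> R) :=
  dbind (uniform (ksubsets k (seq 0 d))) (fun S =>
    fold_right
      (fun j acc =>
         dbind (alg2 (eps / INR k) (delta / INR k) (x j)) (fun xb =>
         dbind acc (fun v => dret (upd v j (INR d / INR k * xb)))))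
      (dret (fun _ => 0)) S).

Fixpoint prodN {A} (N : nat) (D : nat -> dist A) : dist (list A) :=
  match N with
  | O => dret []
  | S n => dbind (prodN n D) (fun l => dbind (D n) (fun a => dret (l ++ [a])))
  end.

Definition sumR (l : list R) : R := fold_right Rplus 0 l.

Definition kpar (eps : R) (d : nat) : nat :=
  Nat.max 1 (Nat.min d (Z.to_nat (Int_part (eps / 2.17)))).

Definition Zj (N : nat) (outs : list (nat -> R)) (j : nat) : R :=
  / INR N * sumR (map (fun v => v j) outs).
Definition Xj (N : nat) (x : nat -> nat -> R) (j : nat) : R :=
  / INR N * sumR (map (fun i => x i j) (seq 0 N)).

Definition maxdev (d N : nat) (x : nat -> nat -> R) (outs : list (nat -> R)) : R :=
  fold_right Rmax 0 (map (fun j => Rabs (Zj N outs j - Xj N x j)) (seq 0 d)).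

(* Main.v *)
Require Import Defs.
From Stdlib Require Import Reals List Lra Lia.
Import ListNotations.
Open Scope R_scope.

Definition E {A} (m : Defs.dist A) (f : A -> R) : R :=
  fold_right Rplus 0 (map (fun pa => fst pa * f (snd pa)) m).
Definition nonneg {A} (m : Defs.dist A) : Prop := Forall (fun pa => 0 <= fst pa) m.

Lemma E_nil {A} (f : A -> R) : E [] f = 0. Proof. reflexivity. Qed.
Lemma E_cons {A} w (a:A) m f : E ((w,a)::m) f = w * f a + E m f.
Proof. reflexivity. Qed.

Lemma E_app {A} (l1 l2 : Defs.dist A) f : E (l1 ++ l2) f = E l1 f + E l2 f.
Proof. induction l1 as [|[w a] l IH]; simpl. unfold E; simpl; ring.
  rewrite !E_cons, IH; ring. Qed.

Lemma E_scale {A} (c:R) (m : Defs.dist A) f :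
  E (map (fun qb => (c * fst qb, snd qb)) m) f = c * E m f.
Proof. induction m as [|[w a] l IH]; simpl. unfold E; simpl; ring.
  rewrite !E_cons, IH; simpl; ring. Qed.

Lemma E_bind {A B} (m : Defs.dist A) (k : A -> Defs.dist B) f :
  E (dbind m k) f = E m (fun a => E (k a) f).
Proof. unfold dbind. induction m as [|[w a] l IH]; simpl. reflexivity.
  rewrite E_app, E_cons, <- IH. f_equal. apply E_scale. Qed.

Lemma E_ret {A} (a:A) f : E (dret a) f = f a.
Proof. unfold E, dret; simpl; ring. Qed.

Lemma E_ext {A} (m : Defs.dist A) f g : (forall a, f a = g a) -> E m f = E m g.
Proof. intro H. induction m as [|[w a] l IH]. reflexivity. rewrite !E_cons, IH, H; ring. Qed.

Lemma E_plus {A} (m : Defs.dist A) f g : E m (fun a => f a + g a) = E m f + E m g.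
Proof. induction m as [|[w a] l IH]. unfold E; simpl; ring. rewrite !E_cons, IH; ring. Qed.

Lemma E_mul {A} (m : Defs.dist A) c f : E m (fun a => c * f a) = c * E m f.
Proof. induction m as [|[w a] l IH]. unfold E; simpl; ring. rewrite !E_cons, IH; ring. Qed.

Lemma E_minus {A} (m : Defs.dist A) f g : E m (fun a => f a - g a) = E m f - E m g.
Proof. induction m as [|[w a] l IH]. unfold E; simpl; ring. rewrite !E_cons, IH; ring. Qed.

Lemma E_mono {A} (m : Defs.dist A) f g : nonneg m -> (forall a, f a <= g a) -> E m f <= E m g.
Proof. intros Hn H. induction Hn as [|[w a] l Hw Hl IH]. unfold E; simpl; lra.
  rewrite !E_cons. simpl in Hw. specialize (H a). nra. Qed.

Lemma E_sum {A} (m : Defs.dist A) (l : list nat) (h : nat -> A -> R) :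
  E m (fun a => sumR (map (fun j => h j a) l)) = sumR (map (fun j => E m (h j)) l).
Proof. induction l as [|j l IH]; simpl.
  - induction m as [|[w a] r IHm]. reflexivity. rewrite E_cons, IHm; ring.
  - rewrite E_plus, IH. reflexivity. Qed.

Lemma Pr_E {A} (m : Defs.dist A) P : Pr m P = E m (fun a => if P a then 1 else 0).
Proof. induction m as [|[w a] l IH]. reflexivity. rewrite E_cons, <- IH.
  unfold Pr; simpl. destruct (P a); ring. Qed.

Lemma nonneg_app {A} (l1 l2 : Defs.dist A) : nonneg l1 -> nonneg l2 -> nonneg (l1 ++ l2).
Proof. intros; apply Forall_app; split; assumption. Qed.

Lemma nonneg_bind {A B} (m : Defs.dist A) (k : A -> Defs.dist B) :
  nonneg m -> (forall pa, In pa m -> nonneg (k (snd pa))) -> nonneg (dbind m k).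
Proof. unfold dbind. intros Hn. induction Hn as [|[w a] l Hw Hl IH]; intros Hk; simpl.
  constructor. apply nonneg_app.
  - assert (Ha := Hk (w,a) (or_introl eq_refl)). simpl in Ha, Hw.
    unfold nonneg in *. apply Forall_map. eapply Forall_impl; [|exact Ha].
    intros [q b]; simpl; intros; nra.
  - apply IH. intros pa Hp; apply Hk; right; exact Hp. Qed.

Lemma nonneg_ret {A} (a:A) : nonneg (dret a).
Proof. constructor. simpl; lra. constructor. Qed.

Lemma sumR_le (l : list nat) f g : (forall j, In j l -> f j <= g j) ->
  sumR (map f l) <= sumR (map g l).
Proof. induction l as [|j l IH]; simpl; intros H. lra.
  assert (H1 := H j (or_introl eq_refl)). assert (sumR (map f l) <= sumR (map g l)).
  apply IH; intros; apply H; auto. lra. Qed.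

Lemma sumR_const (l : list nat) c : sumR (map (fun _ => c) l) = INR (length l) * c.
Proof. induction l; simpl. ring. rewrite IHl. destruct (length l); simpl; ring. Qed.

Lemma kpar_1 eps d : 0 < eps <= 1 -> kpar eps d = 1%nat.
Proof. intros H. unfold kpar.
  assert (Int_part (eps / 2.17) = 0%Z) as ->.
  { symmetry; apply Int_part_spec. simpl. split.
    - assert (eps / 2.17 <= 1 / 2.17) by (unfold Rdiv; apply Rmult_le_compat_r; lra). lra.
    - unfold Rdiv; apply Rmult_le_pos; [lra| left; apply Rinv_0_lt_compat; lra]. }
  simpl. rewrite Nat.min_0_r. reflexivity. Qed.

Lemma ksub1 l : ksubsets 1 l = map (fun j => [j]) l.
Proof. induction l as [|a l IH]; simpl. reflexivity.
  rewrite IH; destruct l; reflexivity. Qed.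

Lemma E_alg2 e dl y (f : R -> R) :
  E (alg2 e dl y) f =
  ((exp e + 2 * dl - 1) / (2 * (exp e + 1)) * y + 1 / 2) * f ((exp e + 1) / (exp e + 2 * dl - 1))
  + (1 - ((exp e + 2 * dl - 1) / (2 * (exp e + 1)) * y + 1 / 2)) * f (- ((exp e + 1) / (exp e + 2 * dl - 1))).
Proof. unfold alg2, E; simpl. ring. Qed.

Lemma E_uniform {A} (l : list A) (f : A -> R) :
  E (uniform l) f = / INR (length l) * fold_right Rplus 0 (map f l).
Proof. unfold uniform. generalize (/ INR (length l)). intro c.
  induction l as [|a l IH]; simpl. unfold E; simpl; ring.
  rewrite E_cons, IH; ring. Qed.

Lemma alg3_E eps delta d x (g : (nat -> R) -> R) :
  E (alg3 eps delta 1 d x) g = / INR d * sumR (map (fun j =>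
     E (alg2 (eps / INR 1) (delta / INR 1) (x j)) (fun xb => g (upd (fun _ => 0) j (INR d / INR 1 * xb)))) (seq 0 d)).
Proof. unfold alg3. rewrite E_bind, ksub1, E_uniform, length_map, length_seq, map_map.
  f_equal. unfold sumR. f_equal. apply map_ext. intro j. simpl fold_right. rewrite E_alg2. unfold E. simpl. ring. Qed.

Lemma uniform_nonneg {A} (l : list A) : nonneg (uniform l).
Proof. unfold uniform, nonneg. apply Forall_map. apply Forall_forall. intros a _. simpl.
  destruct (length l) as [|n]. simpl. rewrite Rinv_0; lra.
  left; apply Rinv_0_lt_compat, lt_0_INR; lia. Qed.

Lemma p_bounds eps delta y : 0 < eps -> 0 <= delta <= 1 -> -1 <= y <= 1 ->
  0 <= (exp eps + 2 * delta - 1) / (2 * (exp eps + 1)) * y + 1 / 2 <= 1.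
Proof. intros He Hd Hy. assert (H1 := exp_ineq1_le eps).
  set (c := (exp eps + 2 * delta - 1) / (2 * (exp eps + 1))).
  assert (0 < c /\ c <= 1/2).
  { unfold c. split. apply Rdiv_lt_0_compat; lra.
    apply Rmult_le_reg_r with (2 * (exp eps + 1)). lra.
    unfold Rdiv. rewrite Rmult_assoc, Rinv_l by lra. lra. }
  nra. Qed.

Lemma alg3_nonneg eps delta d x : 0 < eps -> 0 <= delta <= 1 ->
  (forall j, (j < d)%nat -> -1 <= x j <= 1) -> nonneg (alg3 eps delta 1 d x).
Proof. intros He Hd Hx. unfold alg3. apply nonneg_bind. apply uniform_nonneg.
  intros [w S] Hin. simpl. rewrite ksub1 in Hin. unfold uniform in Hin.
  apply in_map_iff in Hin. destruct Hin as [S' [HS Hin]]. injection HS; intros; subst.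
  apply in_map_iff in Hin. destruct Hin as [j [Hj Hin]]. subst. apply in_seq in Hin.
  simpl. rewrite !Rdiv_1_r.
  pose proof (p_bounds eps delta (x j) He Hd (Hx j ltac:(lia))).
  unfold nonneg. repeat apply Forall_cons; try apply Forall_nil; simpl; lra. Qed.

Lemma alg3_mass eps delta d x : (1 <= d)%nat -> E (alg3 eps delta 1 d x) (fun _ => 1) = 1.
Proof. intros Hd. rewrite alg3_E.
  rewrite (map_ext _ (fun _ => 1)). rewrite sumR_const, length_seq. field.
  apply not_0_INR; lia. intro j. rewrite E_alg2. ring. Qed.

Definition B1 eps delta := (exp eps + 1) / (exp eps + 2 * delta - 1).
Definition pp eps delta y := (exp eps + 2 * delta - 1) / (2 * (exp eps + 1)) * y + 1 / 2.

Lemma E_alg2' e dl y (f : R -> R) :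
  E (alg2 e dl y) f = pp e dl y * f (B1 e dl) + (1 - pp e dl y) * f (- B1 e dl).
Proof. apply E_alg2. Qed.

Lemma exp_quad z : Rabs z <= 1/2 -> exp z <= 1 + z + 2 * z ^ 2.
Proof. intros H0. assert (H : -(1/2) <= z <= 1/2) by (unfold Rabs in H0; destruct (Rcase_abs z); lra).
  assert (H1 := exp_ineq1_le (- z)).
  assert (exp z * exp (-z) = 1) by (rewrite <- exp_plus; replace (z + - z) with 0 by ring; apply exp_0).
  assert (0 < exp z) by apply exp_pos.
  assert (1 <= (1 - z) * (1 + z + 2 * z ^ 2)) by nra.
  nra. Qed.

Lemma sumR_app l1 l2 : sumR (l1 ++ l2) = sumR l1 + sumR l2.
Proof. induction l1; simpl. ring. unfold sumR in *; simpl. rewrite IHl1; ring. Qed.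

Lemma sum_delta (d j : nat) (A Bc : R) : (j < d)%nat ->
  sumR (map (fun j' => if Nat.eqb j' j then A else Bc) (seq 0 d)) = A + (INR d - 1) * Bc.
Proof. induction d as [|n IH]; intros Hj. lia.
  rewrite seq_S, map_app, sumR_app. rewrite S_INR. simpl.
  destruct (Nat.eq_dec j n) as [->|Hne].
  - rewrite Nat.eqb_refl. rewrite (map_ext_in _ (fun _ => Bc)). rewrite sumR_const, length_seq.
    unfold sumR; simpl; ring.
    intros a Ha. apply in_seq in Ha. destruct (Nat.eqb_spec a n); [lia|reflexivity].
  - rewrite IH by lia. destruct (Nat.eqb_spec n j); [lia|]. unfold sumR; simpl; ring. Qed.

Lemma zbound u M w : Rabs u * (2 * M) <= 1/2 -> Rabs w <= 2 * M -> Rabs (u * w) <= 1/2.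
Proof. intros H1 H2. rewrite Rabs_mult. apply Rle_trans with (Rabs u * (2 * M)); auto.
  apply Rmult_le_compat_l; auto. apply Rabs_pos. Qed.

Lemma B1_ge1 eps delta : 0 < eps -> 0 <= delta <= 1 -> 1 <= B1 eps delta.
Proof. intros He Hd. assert (H1 := exp_ineq1_le eps). unfold B1.
  apply Rmult_le_reg_r with (exp eps + 2 * delta - 1). lra.
  unfold Rdiv. rewrite Rmult_assoc, Rinv_l by lra. lra. Qed.

Lemma alg3_mgf eps delta d x j u : 0 < eps -> 0 <= delta <= 1 -> (1 <= d)%nat -> (j < d)%nat ->
  (forall j, (j < d)%nat -> -1 <= x j <= 1) ->
  Rabs u * (2 * (INR d * B1 eps delta)) <= 1/2 ->
  E (alg3 eps delta 1 d x) (fun a => exp (u * (a j - x j))) <= exp (2 * u ^ 2 * (INR d * B1 eps delta ^ 2)).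
Proof. intros He Hd Hd1 Hj Hx Hu. rewrite alg3_E.
  replace (INR 1) with 1 by reflexivity. rewrite !Rdiv_1_r.
  assert (HB := B1_ge1 eps delta He Hd).
  assert (Hdr : 1 <= INR d) by (apply (le_INR 1); lia).
  set (B := B1 eps delta) in *. set (y := x j).
  assert (Hy : -1 <= y <= 1) by (apply Hx; auto).
  set (p := pp eps delta y).
  set (zp := u * (INR d * B - y)). set (zm := u * (INR d * - B - y)). set (z0 := u * (0 - y)).
  apply Rle_trans with (/ INR d * sumR (map (fun j' => if Nat.eqb j' j then
     p * (1 + zp + 2 * zp ^ 2) + (1 - p) * (1 + zm + 2 * zm ^ 2) else 1 + z0 + 2 * z0 ^ 2) (seq 0 d))).
  - apply Rmult_le_compat_l. left; apply Rinv_0_lt_compat; lra.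
    apply sumR_le. intros j' Hj'. apply in_seq in Hj'. rewrite E_alg2'. unfold upd.
    assert (Hp := p_bounds eps delta (x j') He Hd (Hx j' ltac:(lia))).
    destruct (Nat.eqb_spec j' j) as [->|Hne].
    + rewrite Nat.eqb_refl. fold B y p.
      assert (exp zp <= 1 + zp + 2 * zp ^ 2).
      { apply exp_quad. apply (zbound u (INR d * B)); auto. apply Rabs_le; nra. }
      assert (exp zm <= 1 + zm + 2 * zm ^ 2).
      { apply exp_quad. apply (zbound u (INR d * B)); auto. apply Rabs_le; nra. }
      fold zp zm. change (0 <= p <= 1) in Hp. nra.
    + destruct (Nat.eqb_spec j j'); [lia|]. fold B y.
      assert (exp z0 <= 1 + z0 + 2 * z0 ^ 2).
      { apply exp_quad. apply (zbound u (INR d * B)); auto. apply Rabs_le; nra. }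
      replace (u * (0 - y)) with z0 by reflexivity. unfold pp in Hp. nra.
  - rewrite sum_delta by auto.
    assert (Hk : B * (2 * p - 1) = y).
    { unfold B, p, B1, pp. assert (H1 := exp_ineq1_le eps). field. lra. }
    assert (Heq : / INR d * (p * (1 + zp + 2 * zp ^ 2) + (1 - p) * (1 + zm + 2 * zm ^ 2) +
       (INR d - 1) * (1 + z0 + 2 * z0 ^ 2)) = 1 + 2 * u^2 * (INR d * B^2 - y^2)).
    { unfold zp, zm, z0. apply Rmult_eq_reg_l with (INR d); [|lra].
      rewrite <- Rmult_assoc, Rinv_r by lra.
      assert (Hp2 : p = (y / B + 1) / 2) by (field_simplify_eq; [nra|lra]).
      clearbody p. subst p. field. lra. }
    rewrite Heq. eapply Rle_trans; [|apply exp_ineq1_le]. nra. Qed.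

Lemma prodN_nonneg {A} N (D : nat -> Defs.dist A) : (forall i, (i < N)%nat -> nonneg (D i)) -> nonneg (prodN N D).
Proof. induction N as [|n IH]; intros H; simpl. apply nonneg_ret.
  apply nonneg_bind. apply IH; intros; apply H; lia.
  intros; apply nonneg_bind. apply H; lia. intros; apply nonneg_ret. Qed.

Lemma prodN_mass {A} N (D : nat -> Defs.dist A) : (forall i, (i < N)%nat -> E (D i) (fun _ => 1) = 1) ->
  E (prodN N D) (fun _ => 1) = 1.
Proof. induction N as [|n IH]; intros H; simpl. unfold E; simpl; ring.
  rewrite E_bind. rewrite (E_ext _ _ (fun _ => 1)). apply IH; intros; apply H; lia.
  intro l. rewrite E_bind. rewrite (E_ext _ _ (fun _ => 1)). apply H; lia.
  intro a. unfold E, dret; simpl; ring. Qed.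

Definition G (x : nat -> nat -> R) (N j : nat) (outs : list (nat -> R)) :=
  sumR (map (fun v => v j) outs) - sumR (map (fun i => x i j) (seq 0 N)).

Lemma prodN_mgf N (D : nat -> Defs.dist (nat -> R)) x j u c :
  (forall i, (i < N)%nat -> nonneg (D i)) ->
  (forall i, (i < N)%nat -> E (D i) (fun a => exp (u * (a j - x i j))) <= exp c) ->
  E (prodN N D) (fun outs => exp (u * G x N j outs)) <= exp (INR N * c).
Proof. induction N as [|n IH]; intros Hn Hb.
  - simpl. rewrite E_ret. unfold G; simpl. unfold sumR; simpl. replace (u * (0 - 0)) with (0 * c) by ring. lra.
  - simpl prodN. rewrite E_bind.
    apply Rle_trans with (E (prodN n D) (fun l => exp (u * G x n j l) * exp c)).
    + apply E_mono. apply prodN_nonneg; intros; apply Hn; lia.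
      intro l. rewrite E_bind.
      rewrite (E_ext _ _ (fun a => exp (u * G x n j l) * exp (u * (a j - x n j)))).
      rewrite E_mul. apply Rmult_le_compat_l. left; apply exp_pos. apply Hb; lia.
      intro a. rewrite E_ret. rewrite <- exp_plus. f_equal. unfold G.
      rewrite seq_S, !map_app, !sumR_app. unfold sumR; simpl. ring.
    + rewrite (E_ext _ _ (fun l => exp c * exp (u * G x n j l))) by (intro; ring).
      rewrite E_mul. rewrite S_INR.
      replace ((INR n + 1) * c) with (c + INR n * c) by ring. rewrite exp_plus.
      apply Rmult_le_compat_l. left; apply exp_pos. apply IH; intros; [apply Hn|apply Hb]; lia. Qed.

Lemma sumR_nonneg (l : list nat) f : (forall j, In j l -> 0 <= f j) -> 0 <= sumR (map f l).
Proof. induction l; simpl; intros H. lra. assert (0 <= f a) by auto.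
  assert (0 <= sumR (map f l)) by (apply IHl; auto). unfold sumR in *; simpl; lra. Qed.

Lemma sumR_ge_term (l : list nat) f j : (forall j, In j l -> 0 <= f j) -> In j l -> f j <= sumR (map f l).
Proof. induction l; simpl; intros H Hj. contradiction.
  assert (0 <= f a) by auto. assert (0 <= sumR (map f l)) by (apply sumR_nonneg; auto).
  destruct Hj as [->|Hj]. unfold sumR in *; simpl; lra.
  assert (f j <= sumR (map f l)) by (apply IHl; auto). unfold sumR in *; simpl; lra. Qed.

Lemma fold_max (l : list nat) f T : 0 <= T -> fold_right Rmax 0 (map f l) > T ->
  exists j, In j l /\ f j > T.
Proof. induction l; simpl; intros H0 H. lra.
  unfold Rmax in H at 1. destruct (Rle_dec (f a) (fold_right Rmax 0 (map f l))).
  - destruct (IHl H0 H) as [j [Hj Hf]]. eauto.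
  - exists a; split; auto. Qed.

Lemma ind_bound (Gs : nat -> R) l lam T : 0 < lam -> 0 <= T ->
  (exists j, In j l /\ Rabs (Gs j) > T) ->
  1 <= sumR (map (fun j => (exp (lam * Gs j) + exp (- lam * Gs j)) * exp (- (lam * T))) l).
Proof. intros Hl HT [j [Hj HG]].
  eapply Rle_trans; [|apply sumR_ge_term with (j := j); auto].
  - rewrite Rmult_plus_distr_r, <- !exp_plus.
    assert (0 < exp (lam * Gs j + - (lam * T))) by apply exp_pos.
    assert (0 < exp (- lam * Gs j + - (lam * T))) by apply exp_pos.
    unfold Rabs in HG. destruct (Rcase_abs (Gs j)).
    + assert (1 <= exp (- lam * Gs j + - (lam * T))).
      { rewrite <- exp_0. apply exp_le_3 || (destruct (Rle_lt_or_eq_dec 0 (- lam * Gs j + - (lam * T)))); [nra| |]. 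
        left; apply exp_increasing; auto. right; f_equal; auto. }
      lra.
    + assert (1 <= exp (lam * Gs j + - (lam * T))).
      { rewrite <- exp_0. destruct (Rle_lt_or_eq_dec 0 (lam * Gs j + - (lam * T))); [nra| |].
        left; apply exp_increasing; auto. right; f_equal; auto. }
      lra.
  - intros; apply Rmult_le_pos; [|left; apply exp_pos].
    assert (0 < exp (lam * Gs j0)) by apply exp_pos. assert (0 < exp (- lam * Gs j0)) by apply exp_pos. lra. Qed.

Lemma ln_le' a b : 0 < a -> a <= b -> ln a <= ln b.
Proof. intros Ha Hab. destruct (Rle_lt_or_eq_dec _ _ Hab) as [H|H].
  left; apply ln_increasing; auto. right; subst; reflexivity. Qed.

Theorem theorem4 :
  exists C : R, 0 < C /\
  forall (d N : nat) (eps delta beta : R) (x : nat -> nat -> R),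
    (1 <= d)%nat -> (1 <= N)%nat ->
    0 < eps <= 1 -> 0 <= delta <= 1 -> 0 < beta <= 1 / 2 ->
    INR N >= INR d * ln (2 * INR d / beta) ->
    (forall i j, (i < N)%nat -> (j < d)%nat -> -1 <= x i j <= 1) ->
    Pr (prodN N (fun i => alg3 eps delta (kpar eps d) d (x i)))
       (fun outs =>
          if Rle_dec (maxdev d N x outs)
                     (C * sqrt (INR d * ln (INR d / beta))
                        / ((eps + 2 * delta) * sqrt (INR N)))
          then true else false)
    >= 1 - beta.
Proof.
  exists 30. split; [lra|].
  intros d N eps delta beta x Hd HN Heps Hdel Hbeta HNL Hx.
  rewrite kpar_1 by lra.
  assert (Hdr : 1 <= INR d) by (apply (le_INR 1); lia).
  assert (HNr : 1 <= INR N) by (apply (le_INR 1); lia).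
  assert (HE := exp_ineq1_le eps).
  assert (HE3 : exp eps <= 3).
  { apply Rle_trans with (exp 1); [|apply exp_le_3].
    destruct (Rle_lt_or_eq_dec _ _ (proj2 Heps)) as [H|H].
    left; apply exp_increasing; auto. right; subst; reflexivity. }
  assert (HB := B1_ge1 eps delta ltac:(lra) Hdel).
  set (B := B1 eps delta) in *.
  set (V := INR d * B ^ 2).
  assert (HV : 0 < V) by (unfold V; nra).
  set (Q := eps + 2 * delta).
  assert (HQ : 0 < Q) by (unfold Q; lra).
  set (L := ln (2 * INR d / beta)) in *.
  set (l := ln (INR d / beta)).
  assert (Hdb : 2 <= INR d / beta).
  { unfold Rdiv; apply Rmult_le_reg_r with beta; [lra|]. rewrite Rmult_assoc, Rinv_l by lra. lra. }
  assert (Hl : ln 2 <= l) by (apply ln_le'; lra).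
  assert (Hln2 := ln_lt_2).
  assert (HLl : L = ln 2 + l).
  { unfold L, l. rewrite <- ln_mult by lra. f_equal. field. lra. }
  assert (HL0 : 0 < L) by lra.
  assert (HL2 : L <= 2 * l) by lra.
  set (r := sqrt (L / (INR N * V))).
  assert (Hr2 : r * r = L / (INR N * V)).
  { unfold r. apply sqrt_sqrt. apply Rlt_le, Rdiv_lt_0_compat; nra. }
  assert (Hr : 0 < r) by (unfold r; apply sqrt_lt_R0, Rdiv_lt_0_compat; nra).
  set (lam := r / 4).
  assert (Hlam : 0 < lam) by (unfold lam; lra).
  assert (HrdB : r * INR d * B <= 1).
  { assert ((r * INR d * B) ^ 2 = INR d * L / INR N).
    { replace ((r * INR d * B) ^ 2) with ((r * r) * (INR d * INR d * B * B)) by ring.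
      rewrite Hr2. unfold V. field. split; nra. }
    assert (INR d * L / INR N <= 1).
    { apply Rmult_le_reg_r with (INR N); [lra|]. unfold Rdiv.
      rewrite Rmult_assoc, Rinv_l by lra. lra. }
    assert (0 <= r * INR d * B) by (apply Rmult_le_pos; nra).
    nra. }
  assert (Hcond : forall u, Rabs u = lam -> Rabs u * (2 * (INR d * B)) <= 1 / 2).
  { intros u Hu. rewrite Hu. unfold lam. nra. }
  set (tau := 30 * sqrt (INR d * l) / (Q * sqrt (INR N))).
  assert (Htau0 : 0 <= tau).
  { unfold tau. apply Rmult_le_pos; [apply Rmult_le_pos; [lra| apply sqrt_pos]|].
    left; apply Rinv_0_lt_compat; apply Rmult_lt_0_compat; [lra| apply sqrt_lt_R0; lra]. }
  assert (HBQ : B * Q <= 4).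
  { assert (Q / (exp eps + 2 * delta - 1) <= 1).
    { apply Rmult_le_reg_r with (exp eps + 2 * delta - 1); [lra|]. unfold Rdiv.
      rewrite Rmult_assoc, Rinv_l by lra. unfold Q; lra. }
    replace (B * Q) with ((exp eps + 1) * (Q / (exp eps + 2 * delta - 1)))
      by (unfold B, B1; field; lra).
    assert (0 <= Q / (exp eps + 2 * delta - 1)) by (apply Rlt_le, Rdiv_lt_0_compat; lra).
    nra. }
  assert (Htau : 5 * r * V <= tau).
  { assert (H1 : (5 * r * V) ^ 2 = 25 * L * INR d * (B * Q) ^ 2 / (Q * Q * INR N)).
    { replace ((5 * r * V) ^ 2) with (25 * (r * r) * V * V) by ring. rewrite Hr2.
      unfold V. field. split; [lra|]. split; nra. }
    assert (Hs2 : 0 < sqrt (INR N)) by (apply sqrt_lt_R0; lra).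
    assert (H2 : tau ^ 2 = 900 * (INR d * l) / (Q * Q * INR N)).
    { unfold tau. assert (sqrt (INR d * l) * sqrt (INR d * l) = INR d * l) by (apply sqrt_sqrt; nra).
      assert (sqrt (INR N) * sqrt (INR N) = INR N) by (apply sqrt_sqrt; lra).
      transitivity (900 * (sqrt (INR d * l) * sqrt (INR d * l)) / (Q * Q * (sqrt (INR N) * sqrt (INR N)))).
      field. split; lra. rewrite H, H0; reflexivity. }
    assert ((5 * r * V) ^ 2 <= tau ^ 2).
    { rewrite H1, H2. unfold Rdiv. apply Rmult_le_compat_r.
      left; apply Rinv_0_lt_compat; nra.
      assert (0 <= B * Q) by nra.
      assert (HBQ2 : (B * Q) ^ 2 <= 16) by nra.
      assert (25 * L * INR d * (B * Q) ^ 2 <= 25 * L * INR d * 16)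
        by (apply Rmult_le_compat_l; nra).
      assert (25 * L * INR d * 16 <= 25 * (2 * l) * INR d * 16) by nra.
      nra. }
    assert (0 <= 5 * r * V) by nra. nra. }
  set (m := prodN N (fun i => alg3 eps delta 1 d (x i))).
  assert (Hnn : nonneg m).
  { apply prodN_nonneg. intros i Hi. apply alg3_nonneg; try lra. intros; apply Hx; auto. }
  assert (Hmass : E m (fun _ => 1) = 1).
  { apply prodN_mass. intros i Hi. apply alg3_mass; auto. }
  assert (Hmgf : forall u j, Rabs u = lam -> (j < d)%nat ->
     E m (fun o => exp (u * G x N j o)) <= exp (L / 8)).
  { intros u j Hu Hj.
    replace (L / 8) with (INR N * (2 * u ^ 2 * (INR d * B ^ 2))).
    - apply prodN_mgf. intros i Hi. apply alg3_nonneg; try lra. intros; apply Hx; auto.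
      intros i Hi. apply alg3_mgf; try lra; auto; intros; apply Hx; auto.
    - assert (u ^ 2 = lam ^ 2) by (rewrite <- Hu; unfold Rabs; destruct (Rcase_abs u); ring).
      rewrite H. unfold lam. fold V.
      replace (INR N * (2 * (r / 4) ^ 2 * V)) with ((r * r) * (INR N * V) / 8) by field.
      rewrite Hr2. field. nra. }
  set (K := exp (- (lam * (INR N * tau)))).
  assert (Hpt : forall o, 1 - sumR (map (fun j => (exp (lam * G x N j o) + exp (- lam * G x N j o)) * K) (seq 0 d))
     <= (if (if Rle_dec (maxdev d N x o) tau then true else false) then 1 else 0)).
  { intro o. destruct (Rle_dec (maxdev d N x o) tau) as [Hle|Hgt].
    - assert (0 <= sumR (map (fun j => (exp (lam * G x N j o) + exp (- lam * G x N j o)) * K) (seq 0 d))).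
      { apply sumR_nonneg. intros. apply Rmult_le_pos; [|left; apply exp_pos].
        assert (0 < exp (lam * G x N j o)) by apply exp_pos.
        assert (0 < exp (- lam * G x N j o)) by apply exp_pos. lra. }
      lra.
    - assert (1 <= sumR (map (fun j => (exp (lam * G x N j o) + exp (- lam * G x N j o)) * K) (seq 0 d))).
      { apply (ind_bound (fun j => G x N j o)); [lra|nra|].
        apply Rnot_le_gt in Hgt. unfold maxdev in Hgt.
        destruct (fold_max _ _ _ Htau0 Hgt) as [j [Hj Hj2]]. exists j. split; auto.
        replace (Zj N o j - Xj N x j) with (/ INR N * G x N j o) in Hj2 by (unfold Zj, Xj, G; ring).
        rewrite Rabs_mult, Rabs_pos_eq in Hj2 by (left; apply Rinv_0_lt_compat; lra).
        assert (INR N * / INR N = 1) by (apply Rinv_r; lra).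
        assert (0 < / INR N) by (apply Rinv_0_lt_compat; lra).
        assert (0 <= Rabs (G x N j o)) by apply Rabs_pos. nra. }
      lra. }
  rewrite Pr_E. apply Rle_ge. fold m.
  eapply Rle_trans; [|apply E_mono; [exact Hnn| exact Hpt]].
  rewrite E_minus, Hmass. erewrite E_sum.
  assert (sumR (map (fun j => E m (fun o => (exp (lam * G x N j o) + exp (- lam * G x N j o)) * K)) (seq 0 d))
     <= beta).
  { apply Rle_trans with (sumR (map (fun _ => (exp (L / 8) + exp (L / 8)) * K) (seq 0 d))).
    - apply sumR_le. intros j Hj. apply in_seq in Hj.
      rewrite (E_ext _ _ (fun o => K * (exp (lam * G x N j o) + exp (- lam * G x N j o)))) by (intro; ring).
      rewrite E_mul, E_plus.
      assert (H1 := Hmgf lam j ltac:(apply Rabs_pos_eq; lra) ltac:(lia)).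
      assert (H2 := Hmgf (- lam) j ltac:(rewrite Rabs_Ropp; apply Rabs_pos_eq; lra) ltac:(lia)).
      assert (0 < K) by apply exp_pos. nra.
    - rewrite sumR_const, length_seq.
      assert (HK : exp (L / 8) * K <= exp (- L)).
      { unfold K. rewrite <- exp_plus.
        assert (lam * (INR N * tau) >= 5 / 4 * L).
        { assert (lam * (INR N * (5 * r * V)) = 5 / 4 * L).
          { unfold lam. replace (r / 4 * (INR N * (5 * r * V))) with (5/4 * (r * r) * (INR N * V)) by field.
            rewrite Hr2. field. nra. }
          assert (0 <= lam * INR N * (tau - 5 * r * V)) by (apply Rmult_le_pos; nra).
          nra. }
        destruct (Rle_lt_or_eq_dec (L / 8 + - (lam * (INR N * tau))) (- L)) as [Hc|Hc]; [lra| |].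
        left; apply exp_increasing; auto. right; rewrite Hc; reflexivity. }
      assert (HeL : exp (- L) = beta / (2 * INR d)).
      { rewrite exp_Ropp. unfold L. rewrite exp_ln by (apply Rdiv_lt_0_compat; lra). field. lra. }
      rewrite HeL in HK. 
      replace (INR d * ((exp (L / 8) + exp (L / 8)) * K)) with (2 * INR d * (exp (L / 8) * K)) by ring.
      apply Rle_trans with (2 * INR d * (beta / (2 * INR d))).
      apply Rmult_le_compat_l; lra. right; field; lra. }
  lra.
Qed.
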